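(* Let $K\ge 1$ and $1\le K^{*}\le K$ be integers. Let $\alpha_1,\dots,\alpha_K$ be independent random variables with $\alpha_k\sim\mathrm{Bernoulli}(p_k)$, $p_k\in(0,1)$ for $k=1,\dots,K$, and write $\boldsymbol{\alpha}=(\alpha_1,\dots,\alpha_K)$. Let $R\in\{0,1\}$ be a response generated from the GDINA model (identity link) for an item whose required attributes are exactly the first $K^{*}$ attributes (i.e. its $Q$-matrix row is $\mathbf{q}=(1,\dots,1,0,\dots,0)$ with $K^{*}$ ones): $$P(R=1\mid\boldsymbol{\alpha})=\delta_0+\sum_{k=1}^{K^{*}}\delta_k\alpha_k+\sum_{1\le k<k'\le K^{*}}\delta_{kk'}\alpha_k\alpha_{k'}+\dots+\delta_{12\cdots K^{*}}\prod_{k=1}^{K^{*}}\alpha_k\in[0,1],$$ and assume the monotonicity condition: for every $k\in\{1,\dots,K^{*}\}$ and every configuration of the other attributes, acquiring attribute $\alpha_k$ (changing $\alpha_k$ from $0$ to $1$) strictly increases $P(R=1\mid\boldsymbol{\alpha})$. Then the mis-specified linear additive model of $R$ regressed on $(\alpha_1,\dots,\alpha_K)$ has mean function $\mathbb{E}^{*}[R\mid\boldsymbol{\alpha}]=\beta_0+\beta_1\alpha_1+\dots+\beta_K\alpha_K$ with $\beta_l\neq 0$ for $l=1,\dots,K^{*}$ and $\beta_k=0$ for $k=K^{*}+1,\dots,K$.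
   Context: The mis-specified linear additive model's mean function $\mathbb{E}^{*}[R\mid\boldsymbol{\alpha}]$ denotes the population linear regression (least squares) mean function of $R$ on $\alpha_1,\dots,\alpha_K$ with an intercept, i.e. $\beta_0+\sum_{k=1}^K\beta_k\alpha_k$ where $(\beta_0,\dots,\beta_K)$ minimize $\mathbb{E}\big[(R-\beta_0-\sum_{k=1}^K\beta_k\alpha_k)^2\big]$ under the joint distribution of $(\boldsymbol{\alpha},R)$ described. In the GDINA model, the sum runs over the intercept, main effects and all interaction terms among the required attributes $\alpha_1,\dots,\alpha_{K^{*}}$ with real coefficients. *)

(* Defs.v *)
From mathcomp Require Import all_boot all_order all_algebra.
From mathcomp Require Import reals.
Set Implicit Arguments. Unset Strict Implicit. Unset Printing Implicit Defensive.
Import Order.TTheory GRing.Theory Num.Theory.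
Local Open Scope ring_scope.

Section Defs.
Variable R : realType.
Variable K : nat.

Definition attr := {ffun 'I_K -> bool}.

Definition prior (p : 'I_K -> R) (a : attr) : R :=
  \prod_(k < K) (if a k then p k else 1 - p k).

(* GDINA item response function (identity link) for the item whose
   required attributes are exactly the first Kstar attributes:
   sum over all subsets S of the required attributes of
   delta_S * prod_{k in S} alpha_k  (S = set0 gives the intercept delta_0). *)
Definition gdina (Kstar : nat) (delta : {set 'I_K} -> R) (a : attr) : R :=
  \sum_(S : {set 'I_K} | S \subset [set k : 'I_K | (val k < Kstar)%N])
     delta S * \prod_(k in S) (a k)%:R.

Definition acquire (a : attr) (k : 'I_K) : attr :=
  [ffun j => if j == k then true else a j].

Definition gdina_monotone (Kstar : nat) (f : attr -> R) : Prop :=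
  forall (k : 'I_K), (val k < Kstar)%N ->
  forall a : attr, a k = false -> f a < f (acquire a k).

Definition linpred (b0 : R) (b : 'I_K -> R) (a : attr) : R :=
  b0 + \sum_(k < K) b k * (a k)%:R.

(* E[(R - b0 - sum_k b_k alpha_k)^2] under the joint law of (alpha, R):
   P(alpha = a, R = 1) = prior a * f a, P(alpha = a, R = 0) = prior a * (1 - f a). *)
Definition sq_loss (p : 'I_K -> R) (f : attr -> R) (b0 : R) (b : 'I_K -> R) : R :=
  \sum_(a : attr) prior p a *
    (f a * (1 - linpred b0 b a) ^+ 2 + (1 - f a) * (0 - linpred b0 b a) ^+ 2).

Definition is_ls_min (p : 'I_K -> R) (f : attr -> R) (b0 : R) (b : 'I_K -> R) : Prop :=
  forall (c0 : R) (c : 'I_K -> R), sq_loss p f b0 b <= sq_loss p f c0 c.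

End Defs.

(* Main.v *)
Require Import Defs.
From mathcomp Require Import all_boot all_order all_algebra.
From mathcomp Require Import reals ring lra.
Import Order.TTheory GRing.Theory Num.Theory.
Set Implicit Arguments. Unset Strict Implicit. Unset Printing Implicit Defensive.
Local Open Scope ring_scope.
Section Helpers.
Variable R : realType.
Variable K : nat.
Variable p : 'I_K -> R.

Definition EE (h : attr K -> R) : R := \sum_(a : attr K) prior p a * h a.
Definition setk (a : attr K) (k : 'I_K) (b : bool) : attr K :=
  [ffun j => if j == k then b else a j].
Definition ww (k : 'I_K) (b : bool) : R := if b then p k else 1 - p k.
Definition xk (k : 'I_K) (a : attr K) : R := (a k)%:R - p k.
Definition vv (k : 'I_K) : R := p k * (1 - p k).

Lemma E_ext u1 u2 : (forall a, u1 a = u2 a) -> EE u1 = EE u2.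
Proof. by move=> h; apply: eq_bigr => a _; rewrite h. Qed.

Lemma E_split u1 u2 : EE (fun a => u1 a + u2 a) = EE u1 + EE u2.
Proof. by rewrite /EE -big_split; apply: eq_bigr => a _; rewrite mulrDr. Qed.

Lemma E_scale c u : EE (fun a => c * u a) = c * EE u.
Proof. by rewrite /EE mulr_sumr; apply: eq_bigr => a _; rewrite mulrCA. Qed.

Lemma E_sum (u : 'I_K -> attr K -> R) :
  EE (fun a => \sum_k u k a) = \sum_k EE (u k).
Proof.
rewrite /EE; under eq_bigr do rewrite mulr_sumr.
exact: exchange_big.
Qed.

Lemma E1 : EE (fun _ => 1) = 1.
Proof.
rewrite /EE; under eq_bigr do rewrite mulr1.
rewrite /prior -(bigA_distr_bigA (fun k (b : bool) => if b then p k else 1 - p k)) /=.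
by apply: big1 => k _; rewrite big_bool /= addrC subrK.
Qed.

Lemma E_const c : EE (fun _ => c) = c.
Proof.
transitivity (EE (fun _ => c * 1)); first by apply: E_ext => a; rewrite mulr1.
by rewrite E_scale E1 mulr1.
Qed.

Lemma E_cond k h : EE h =
  EE (fun a => p k * h (setk a k true) + (1 - p k) * h (setk a k false)).
Proof.
pose flip (a : attr K) : attr K := setk a k (~~ a k).
have flipK : involutive flip.
  move=> a; apply/ffunP => j; rewrite /flip /setk !ffunE.
  by case: (j =P k) => [->|//]; rewrite eqxx negbK.
have split_sum : forall F : attr K -> R,
    \sum_(a : attr K) F a = \sum_(a : attr K | a k) (F a + F (flip a)).
  move=> F; rewrite big_split /= [LHS](bigID (fun a : attr K => a k)) /=.
  congr (_ + _); rewrite (reindex_inj (can_inj flipK)) /=.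
  by apply: eq_bigl => a; rewrite /flip /setk ffunE eqxx negbK.
pose r (b : attr K) := \prod_(j | j != k) ww j (b j).
have prior_r : forall b, prior p b = ww k (b k) * r b.
  by move=> b; rewrite /prior (bigD1 k).
have r_set : forall b c, r (setk b k c) = r b.
  by move=> b c; apply: eq_bigr => j /negbTE jk; rewrite ffunE jk.
rewrite /EE !split_sum; apply: eq_bigr => a ak.
have e1 : setk a k true = a.
  by apply/ffunP => j; rewrite ffunE; case: eqP => // ->; rewrite ak.
have e2 : flip a = setk a k false by rewrite /flip ak.
have e3 : forall c, setk (flip a) k c = setk a k c.
  by move=> c; apply/ffunP => j; rewrite !ffunE; case: eqP.
rewrite !e3 e1 e2 !prior_r r_set /ww ak ffunE eqxx.
ring.
Qed.

Hypothesis hp : forall k, 0 < p k < 1.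

Lemma E_x k : EE (xk k) = 0.
Proof.
rewrite (E_cond k) /xk -[RHS](E_const 0); apply: E_ext => a.
rewrite !ffunE eqxx /=; ring.
Qed.

Lemma E_xx j k : EE (fun a => xk j a * xk k a) = if j == k then vv k else 0.
Proof.
rewrite (E_cond k); case: eqP => [->|/eqP jk].
  rewrite -[RHS](E_const (vv k)); apply: E_ext => a.
  rewrite /xk /vv !ffunE eqxx /=; ring.
rewrite -[RHS](E_const 0); apply: E_ext => a.
rewrite /xk !ffunE eqxx (negbTE jk) /=; ring.
Qed.

Lemma prior_gt0 a : 0 < prior p a.
Proof.
apply: prodr_gt0 => k _; have /andP[h0 h1] := hp k.
by case: (a k) => //; rewrite subr_gt0.
Qed.

Lemma E_pos h : (forall a, 0 < h a) -> 0 < EE h.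
Proof.
move=> hpos; rewrite /EE (bigD1 [ffun=> false]) //=.
apply: ltr_wpDr; last by rewrite mulr_gt0 ?prior_gt0.
by apply: sumr_ge0 => a _; rewrite mulr_ge0 // ltW ?prior_gt0.
Qed.

Variable f : attr K -> R.
Definition FF k := EE (fun a => f a * xk k a).

Lemma loss_expand b0 b :
  sq_loss p f b0 b = EE f - 2 * ((b0 + \sum_k b k * p k) * EE f + \sum_k b k * FF k)
     + ((b0 + \sum_k b k * p k) ^+ 2 + \sum_k b k ^+ 2 * vv k).
Proof.
set c := b0 + \sum_k b k * p k.
have Lx : forall a, linpred b0 b a = c + \sum_k b k * xk k a.
  move=> a; rewrite /linpred /xk.
  have -> : \sum_k b k * ((a k)%:R - p k) = \sum_k b k * (a k)%:R - \sum_k b k * p k.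
    by rewrite -sumrB; apply: eq_bigr => k _; rewrite mulrBr.
  rewrite /c; ring.
transitivity (EE (fun a => f a + (-2) * (c * f a + \sum_k b k * (f a * xk k a))
   + (c ^+ 2 * 1 + 2 * c * \sum_k b k * xk k a
      + \sum_j \sum_k (b j * b k) * (xk j a * xk k a)))).
  rewrite /sq_loss; apply: eq_bigr => a _; congr (_ * _); rewrite Lx.
  set S := \sum_k b k * xk k a.
  have SS : S * S = \sum_j \sum_k (b j * b k) * (xk j a * xk k a).
    rewrite mulr_suml; apply: eq_bigr => j _; rewrite mulr_sumr.
    by apply: eq_bigr => k _; ring.
  have fS : f a * S = \sum_k b k * (f a * xk k a).
    by rewrite mulr_sumr; apply: eq_bigr => k _; ring.
  rewrite -SS -fS; ring.
rewrite !E_split !E_scale E_split E_scale !E_sum E1.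
under eq_bigr do rewrite E_scale.
under [\sum_k EE (fun a => b k * xk k a)]eq_bigr do rewrite E_scale E_x.

under [\sum_j EE _]eq_bigr do rewrite E_sum.
have -> : \sum_i \sum_k EE (fun a : attr K => b i * b k * (xk i a * xk k a))
    = \sum_k b k ^+ 2 * vv k.
  apply: eq_bigr => j _.
  under eq_bigr do rewrite E_scale E_xx.
  rewrite (bigD1 j) //= eqxx big1 => [|k]; last by rewrite eq_sym => /negbTE ->; rewrite mulr0.
  by rewrite addr0 expr2.
have -> : \sum_k b k * (0:R) = 0 by rewrite big1 // => k _; rewrite mulr0.
rewrite /FF.
ring.
Qed.

End Helpers.

Theorem proposition2 (R : realType) (K Kstar : nat)
  (p : 'I_K -> R) (delta : {set 'I_K} -> R) :
  (1 <= K)%N -> (1 <= Kstar <= K)%N ->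
  (forall k, 0 < p k < 1) ->
  (forall a : attr K, 0 <= gdina Kstar delta a <= 1) ->
  gdina_monotone Kstar (gdina Kstar delta) ->
  (exists (b0 : R) (b : 'I_K -> R), is_ls_min p (gdina Kstar delta) b0 b) /\
  (forall (b0 : R) (b : 'I_K -> R), is_ls_min p (gdina Kstar delta) b0 b ->
     (forall l : 'I_K, (val l < Kstar)%N -> b l != 0) /\
     (forall k : 'I_K, (Kstar <= val k)%N -> b k = 0)).
Proof.
move=> _ _ hp _ hmono.
set f := gdina Kstar delta.
have vpos : forall k, 0 < vv p k.
  by move=> k; have /andP[h0 h1] := hp k; rewrite /vv mulr_gt0 // subr_gt0.
pose beta k := FF p f k / vv p k.
have Fb : forall k, FF p f k = vv p k * beta k.
  by move=> k; rewrite /beta mulrC divfK // gt_eqF.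
pose m := EE p f.
pose C0 := m - m ^+ 2 - \sum_k vv p k * beta k ^+ 2.
pose Phi b0 (b : 'I_K -> R) := (b0 + \sum_k b k * p k - m) ^+ 2
   + \sum_k vv p k * (b k - beta k) ^+ 2.
have key : forall b0 b, sq_loss p f b0 b = C0 + Phi b0 b.
  move=> b0 b; rewrite (loss_expand p f).
  have -> : \sum_k b k * FF p f k = \sum_k b k * (vv p k * beta k).
    by apply: eq_bigr => k _; rewrite Fb.
  rewrite /C0 /Phi /m.
  have -> : \sum_k vv p k * (b k - beta k) ^+ 2 = \sum_k b k ^+ 2 * vv p k
      - 2 * \sum_k b k * (vv p k * beta k) + \sum_k vv p k * beta k ^+ 2.
    rewrite mulr_sumr -sumrB -big_split; apply: eq_bigr => k _; rewrite /=; ring.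
  rewrite /C0 /Phi /m; ring.
have Phi_ge0 : forall b0 b, 0 <= Phi b0 b.
  move=> b0 b; rewrite addr_ge0 ?sqr_ge0 //; apply: sumr_ge0 => k _.
  by rewrite mulr_ge0 ?sqr_ge0 // ltW.
set ob0 := m - \sum_k beta k * p k.
have Phi_opt : Phi ob0 beta = 0.
  rewrite /Phi /ob0 [\sum_k vv p k * _]big1 => [|k _]; last by rewrite subrr expr0n mulr0.
  by rewrite subrK subrr expr0n addr0.
split.
  exists ob0, beta => c0 c; rewrite !key Phi_opt addr0.
  by rewrite lerDl.
move=> b0 b hmin.
have hb : forall k, b k = beta k.
  have hle : Phi b0 b <= 0.
    by move: (hmin ob0 beta); rewrite !key Phi_opt; lra.
  move=> k.
  have Hs : vv p k * (b k - beta k) ^+ 2 <= \sum_k vv p k * (b k - beta k) ^+ 2.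
    rewrite (bigD1 k) //= lerDl; apply: sumr_ge0 => j _.
    by rewrite mulr_ge0 ?sqr_ge0 // ltW.
  have Hc := sqr_ge0 (b0 + \sum_k b k * p k - m).
  have H1 : vv p k * (b k - beta k) ^+ 2 <= 0 by move: hle; rewrite /Phi; lra.
  move: H1; rewrite (pmulr_rle0 _ (vpos k)) => H2.
  have H3 : (b k - beta k) ^+ 2 == 0 by rewrite eq_le H2 sqr_ge0.
  by move: H3; rewrite sqrf_eq0 subr_eq0 => /eqP.
split.
  move=> l hl; rewrite hb /beta.
  apply: lt0r_neq0; apply: divr_gt0 (vpos l).
  rewrite /FF (E_cond p l).
  have -> : EE p (fun a => p l * (f (setk a l true) * xk p l (setk a l true))
      + (1 - p l) * (f (setk a l false) * xk p l (setk a l false)))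
      = EE p (fun a => vv p l * (f (setk a l true) - f (setk a l false))).
    by apply: E_ext => a; rewrite /xk /vv !ffunE eqxx /=; ring.
  rewrite E_scale mulr_gt0 //; apply: E_pos => // a.
  rewrite subr_gt0.
  have h0 : setk a l false l = false by rewrite ffunE eqxx.
  have eacq : acquire (setk a l false) l = setk a l true.
    by apply/ffunP => j; rewrite !ffunE; case: eqP.
  by have := hmono l hl _ h0; rewrite eacq.
move=> k hk; rewrite hb /beta.
have inv : forall a c, f (setk a k c) = f a.
  move=> a c; rewrite /f /gdina; apply: eq_bigr => S hS; congr (_ * _).
  apply: eq_bigr => i iS; rewrite ffunE.
  have ilt : (val i < Kstar)%N by move: (subsetP hS i iS); rewrite inE.
  have -> // : (i == k) = false.
  by apply/eqP => eik; move: hk; rewrite -eik leqNgt ilt.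
suff -> : FF p f k = 0 by rewrite mul0r.
rewrite /FF (E_cond p k) -[RHS](E_const p 0); apply: E_ext => a.
by rewrite !inv /xk !ffunE eqxx /=; ring.
Qed.
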